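(* The class $G_{UDG}$ is a strict subclass of the class $G_{LGG}$: every ordered bipartite graph in $G_{UDG}$ belongs to $G_{LGG}$, and there is an ordered bipartite graph in $G_{LGG}$ that is not (up to order-preserving isomorphism) in $G_{UDG}$.
   Context: An ordered bipartite graph is $G=(U,V,E)$ where $U,V$ are disjoint finite sets, each carrying a strict total order, and $E\subseteq U\times V$. A unit distance graph (UDG) on a planar point set $P$ joins two points iff their Euclidean distance is exactly $1$. A locally Gabriel graph (LGG) on $P$ is a geometric graph such that for every edge $(u,v)$ the disk with diameter $\overline{uv}$ contains no neighbour of $u$ or $v$ (other than $u,v$). Construction. Let $G$ be a UDG or LGG on a point set $P$ in convex position, and let $p_1,p_2\in P$ be antipodal (there are parallel lines through $p_1$ and $p_2$ with all of $P$ between them). Draw the line $p_1p_2$ horizontally; let $U=\{u_1,\dots,u_n\}$ be the points of $P$ strictly above it and $V=\{v_1,\dots,v_m\}$ those strictly below, each labelled from right to left. Let $E'$ be the set of edges of $G$ with one endpoint in $U$ and the other in $V$. For an edge $(u,v)\in E'$ with $v\in V$, let $v^{r}$ and $v^{\ell}$ be the points immediately to the right and left of $v$ along the lower boundary of the convex hull (in $V\cup\{p_1,p_2\}$); at least one of $\angle uvv^{r}$, $\angle uvv^{\ell}$ is acute. Put $(u,v)$ in $E_1$ if $\angle uvv^{r}$ is acute, otherwise in $E_2$ (either choice if both are acute). $G_1=(U,V,E_1)$ is ordered by $u_1<\dots<u_n$, $v_1<\dots<v_m$; $G_2=(U,V,E_2)$ carries the reversed orders. $G'_1$ (resp. $G'_2$)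 is obtained from $G_1$ (resp. $G_2$) by deleting, for every $v\in V$, the edge joining $v$ to its neighbour of highest order in $U$ in that graph's ordering. $G_{UDG}$ (resp. $G_{LGG}$) is the class of all ordered bipartite graphs $G'_1,G'_2$ obtained in this way from UDGs (resp. LGGs) on convex point sets. *)

(* Defs.v *)
From Stdlib Require Import Reals List Arith.
Import ListNotations.
Open Scope R_scope.

Definition pt : Type := (R * R)%type.
Definition p0 : pt := (0, 0).

Definition vsub (p q : pt) : pt := (fst p - fst q, snd p - snd q).
Definition dot (p q : pt) : R := fst p * fst q + snd p * snd q.
Definition cross (p q : pt) : R := fst p * snd q - snd p * fst q.

Fixpoint wsum (ws : list R) (S : list pt) : pt :=
  match ws, S with
  | w :: ws', s :: S' =>
      let r := wsum ws' S' in (w * fst s + fst r, w * snd s + snd r)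
  | _, _ => (0, 0)
  end.

Definition in_hull (S : list pt) (q : pt) : Prop :=
  exists ws : list R,
    length ws = length S /\ Forall (fun w => 0 <= w) ws /\
    fold_right Rplus 0 ws = 1 /\ q = wsum ws S.

Definition convex_position (P : list pt) : Prop :=
  NoDup P /\
  forall i, (i < length P)%nat ->
    ~ in_hull (firstn i P ++ skipn (S i) P) (nth i P p0).

Definition antipodal (P : list pt) (p1 p2 : pt) : Prop :=
  exists nv : pt, nv <> (0, 0) /\
    forall q, In q P -> dot nv p1 <= dot nv q /\ dot nv q <= dot nv p2.

Definition udg (P : list pt) (p q : pt) : Prop :=
  In p P /\ In q P /\ dot (vsub p q) (vsub p q) = 1.

(* adj is a locally Gabriel graph on P: a simple graph on the points of P
   such that for every edge (u,v), the closed disk with diameter uv contains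
   no neighbour w of u or v other than u, v.  (w is in that closed disk iff
   (w-u).(w-v) <= 0.) *)
Definition is_LGG (P : list pt) (adj : pt -> pt -> Prop) : Prop :=
  (forall p q, adj p q -> In p P /\ In q P /\ p <> q) /\
  (forall p q, adj p q -> adj q p) /\
  (forall u v, adj u v -> forall w, w <> u -> w <> v ->
     (adj u w \/ adj v w) -> dot (vsub w u) (vsub w v) > 0).

(** ** Ordered bipartite graphs, in canonical form:
    U = {0,..,nU-1}, V = {0,..,nV-1} with the natural orders. Any ordered
    bipartite graph is order-isomorphic to exactly one such graph. *)
Record obg := mkObg { nU : nat; nV : nat; oadj : nat -> nat -> Prop }.

Definition obg_iso (G H : obg) : Prop :=
  nU G = nU H /\ nV G = nV H /\
  forall i j, (i < nU G)%nat -> (j < nV G)%nat -> (oadj G i j <-> oadj H i j).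

(** The line pl pr is drawn horizontally with pl on
    the left and pr on the right ("above" = to the left of the directed line
    pl -> pr).  Both drawings are covered since the pair (pl, pr) is an
    arbitrary ordered antipodal pair. *)

Definition above (pl pr q : pt) : Prop := cross (vsub pr pl) (vsub q pl) > 0.
Definition below (pl pr q : pt) : Prop := cross (vsub pr pl) (vsub q pl) < 0.

(* us = [u_1; ...; u_n]: the points of P strictly above, listed from right to
   left along the (upper) boundary of the convex hull, i.e. counterclockwise
   as seen from pl. *)
Definition upper_labelling (P : list pt) (pl pr : pt) (us : list pt) : Prop :=
  NoDup us /\ (forall q, In q us <-> In q P /\ above pl pr q) /\
  forall i j, (i < j)%nat -> (j < length us)%nat ->
    cross (vsub (nth i us p0) pl) (vsub (nth j us p0) pl) > 0.

(* vs = [v_1; ...; v_m]: the points strictly below, from right to left along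
   the lower boundary of the convex hull, i.e. clockwise as seen from pl. *)
Definition lower_labelling (P : list pt) (pl pr : pt) (vs : list pt) : Prop :=
  NoDup vs /\ (forall q, In q vs <-> In q P /\ below pl pr q) /\
  forall i j, (i < j)%nat -> (j < length vs)%nat ->
    cross (vsub (nth i vs p0) pl) (vsub (nth j vs p0) pl) < 0.

Definition acute (u v w : pt) : Prop := dot (vsub u v) (vsub w v) > 0.

(* right / left neighbours of v_(j+1) (0-based index j) along the lower
   boundary of the convex hull of V together with pl, pr *)
Definition vright (pr : pt) (vs : list pt) (j : nat) : pt :=
  match j with O => pr | S j' => nth j' vs pr end.
Definition vleft (pl : pt) (vs : list pt) (j : nat) : pt := nth (S j) vs pl.

(* side i j = true means the edge (u_i, v_j) is put in E1, false in E2: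
   E1 if angle u v v^r is acute, otherwise E2 (either choice if both acute). *)
Definition valid_split (adj : pt -> pt -> Prop) (pl pr : pt)
    (us vs : list pt) (side : nat -> nat -> bool) : Prop :=
  forall i j, (i < length us)%nat -> (j < length vs)%nat ->
    adj (nth i us p0) (nth j vs p0) ->
    let u := nth i us p0 in let v := nth j vs p0 in
    (side i j = true -> acute u v (vright pr vs j)) /\
    (side i j = false ->
       ~ acute u v (vright pr vs j) \/ acute u v (vleft pl vs j)).

Definition G1adj adj (us vs : list pt) side (i j : nat) : Prop :=
  (i < length us)%nat /\ (j < length vs)%nat /\
  adj (nth i us p0) (nth j vs p0) /\ side i j = true.

(* G2 = (U, V, E2) with reversed orders: index i of G2 is u_(n-i) *)
Definition G2adj adj (us vs : list pt) side (i j : nat) : Prop :=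
  (i < length us)%nat /\ (j < length vs)%nat /\
  adj (nth (length us - S i)%nat us p0) (nth (length vs - S j)%nat vs p0) /\
  side (length us - S i)%nat (length vs - S j)%nat = false.

(* G' : delete, for each v, the edge to its highest-ordered neighbour in U,
   i.e. keep an edge (i,j) iff j has a neighbour of higher order than i. *)
Definition prune (g : nat -> nat -> Prop) (i j : nat) : Prop :=
  g i j /\ exists k, (i < k)%nat /\ g k j.

Definition G1' adj us vs side : obg :=
  mkObg (length us) (length vs) (prune (G1adj adj us vs side)).
Definition G2' adj us vs side : obg :=
  mkObg (length us) (length vs) (prune (G2adj adj us vs side)).

Definition obtained_from (P : list pt) (adj : pt -> pt -> Prop) (H : obg)
  : Prop :=
  convex_position P /\
  exists (pl pr : pt) (us vs : list pt) (side : nat -> nat -> bool),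
    In pl P /\ In pr P /\ pl <> pr /\ antipodal P pl pr /\
    upper_labelling P pl pr us /\ lower_labelling P pl pr vs /\
    valid_split adj pl pr us vs side /\
    (obg_iso H (G1' adj us vs side) \/ obg_iso H (G2' adj us vs side)).

Definition in_G_UDG (H : obg) : Prop :=
  exists P : list pt, obtained_from P (udg P) H.

Definition in_G_LGG (H : obg) : Prop :=
  exists (P : list pt) (adj : pt -> pt -> Prop),
    is_LGG P adj /\ obtained_from P adj H.

(* Main.v *)
Require Import Defs.
From Stdlib Require Import Reals List Arith Lra Psatz.
Import ListNotations.
Open Scope R_scope.

Fixpoint sumR (l : list R) : R := match l with [] => 0 | x :: r => x + sumR r end.

Lemma sumR_fold l : fold_right Rplus 0 l = sumR l.
Proof. induction l; simpl; auto; rewrite IHl; auto. Qed.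

Lemma wsum_app : forall ws1 S1 ws2 S2, length ws1 = length S1 ->
  wsum (ws1 ++ ws2) (S1 ++ S2) =
  (fst (wsum ws1 S1) + fst (wsum ws2 S2), snd (wsum ws1 S1) + snd (wsum ws2 S2)).
Proof.
  induction ws1 as [|w ws1 IH]; intros S1 ws2 S2 Hl; destruct S1 as [|s S1]; simpl in *; try discriminate.
  - destruct (wsum ws2 S2); simpl; f_equal; ring.
  - injection Hl as Hl. rewrite (IH S1 ws2 S2 Hl). simpl. f_equal; ring.
Qed.

Lemma sumR_app l1 l2 : sumR (l1 ++ l2) = sumR l1 + sumR l2.
Proof. induction l1; simpl; try rewrite IHl1; ring. Qed.

Lemma split_at_len {A B} : forall (ws : list A) (S1 : list B) x S2,
  length ws = length (S1 ++ x :: S2) ->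
  exists ws1 w ws2, ws = ws1 ++ w :: ws2 /\ length ws1 = length S1 /\ length ws2 = length S2.
Proof.
  induction ws as [|a ws IH]; intros S1 x S2 H.
  - rewrite length_app in H; simpl in H; lia.
  - destruct S1 as [|b S1].
    + exists [], a, ws. simpl in *. split; auto.
    + simpl in H. injection H as H. destruct (IH S1 x S2 H) as (ws1 & w & ws2 & -> & H1 & H2).
      exists (a :: ws1), w, ws2. simpl. auto.
Qed.

Lemma hull_embed : forall L S ws, NoDup S -> NoDup L -> incl S L ->
  length ws = length S -> Forall (fun w => 0 <= w) ws ->
  exists ws', length ws' = length L /\ Forall (fun w => 0 <= w) ws' /\
    sumR ws' = sumR ws /\ wsum ws' L = wsum ws S.
Proof.
  induction L as [|x L IH]; intros S ws HS HL Hinc Hlen Hpos.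
  - destruct S as [|s S]. 2:{ exfalso. apply (Hinc s). left; auto. }
    destruct ws; simpl in Hlen; try discriminate.
    exists []. simpl. repeat split; auto.
  - inversion HL as [|? ? Hx HL']; subst.
    destruct (in_dec (fun a b : pt => ltac:(decide equality; apply Req_EM_T)) x S) as [Hin|Hnin].
    + destruct (in_split x S Hin) as (S1 & S2 & ->).
      destruct (split_at_len ws S1 x S2 Hlen) as (ws1 & w & ws2 & Hws & Hlen1 & Hlen2).
      subst ws. apply Forall_app in Hpos as [Hp1 Hp2]. inversion Hp2 as [|? ? Hw0 Hp3]; subst.
      destruct (IH (S1 ++ S2) (ws1 ++ ws2)) as (ws' & H1 & H2 & H3 & H4).
      * eapply NoDup_remove_1; eauto.
      * auto.
      * intros y Hy. assert (Hy' : In y (S1 ++ x :: S2)) by (apply in_app_or in Hy; apply in_or_app; simpl; tauto).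
        destruct (Hinc y Hy') as [Heq|]; auto. subst y.
        exfalso. eapply NoDup_remove_2; eauto.
      * rewrite !length_app; lia.
      * apply Forall_app; auto.
      * exists (w :: ws'). simpl. repeat split; auto.
        -- rewrite sumR_app, H3, sumR_app. simpl. ring.
        -- rewrite H4, !wsum_app by auto. simpl.
           simpl. f_equal; ring.
    + destruct (IH S ws) as (ws' & H1 & H2 & H3 & H4); auto.
      { intros y Hy. destruct (Hinc y Hy); auto. subst; contradiction. }
      exists (0 :: ws'). simpl. split; [|split; [|split]].
      * lia.
      * constructor; auto; lra.
      * rewrite H3; ring.
      * rewrite H4. destruct (wsum ws S); simpl; f_equal; ring.
Qed.

Lemma list_decomp {A} (d : A) : forall P i, (i < length P)%nat ->
  P = firstn i P ++ nth i P d :: skipn (S i) P.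
Proof.
  induction P as [|a P IH]; intros i Hi; simpl in Hi; [lia|].
  destruct i; simpl; auto. f_equal. apply IH. lia.
Qed.

Lemma hull_mono L S q : NoDup S -> NoDup L -> incl S L -> in_hull S q -> in_hull L q.
Proof.
  intros HS HL Hinc (ws & H1 & H2 & H3 & H4).
  destruct (hull_embed L S ws HS HL Hinc H1 H2) as (ws' & G1 & G2 & G3 & G4).
  exists ws'. repeat split; auto.
  - rewrite sumR_fold, G3, <- sumR_fold; auto.
  - rewrite G4; auto.
Qed.

Lemma not_in_hull P q S : convex_position P -> In q P -> NoDup S ->
  (forall s, In s S -> In s P /\ s <> q) -> in_hull S q -> False.
Proof.
  intros [HND Hcv] Hq HS HSP Hh.
  destruct (In_nth P q p0 Hq) as (i & Hi & Hnth).
  apply (Hcv i Hi). rewrite Hnth.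
  assert (Hdec := list_decomp p0 P i Hi). rewrite Hnth in Hdec.
  apply (hull_mono _ S); auto.
  - rewrite Hdec in HND. eapply NoDup_remove_1; eauto.
  - intros s Hs. destruct (HSP s Hs) as [HsP Hne]. rewrite Hdec in HsP.
    apply in_app_or in HsP. apply in_or_app. simpl in HsP. destruct HsP as [?|[?|?]]; auto.
    subst; contradiction.
Qed.

Definition cr3 (o a b : pt) : R := cross (vsub a o) (vsub b o).

Lemma cr3_aa o a : cr3 o a a = 0.
Proof. unfold cr3, cross, vsub; simpl; ring. Qed.
Lemma cr3_oa o a : cr3 o o a = 0.
Proof. unfold cr3, cross, vsub; simpl; ring. Qed.
Lemma cr3_ao o a : cr3 o a o = 0.
Proof. unfold cr3, cross, vsub; simpl; ring. Qed.
Lemma cr3_anti o a b : cr3 o a b = - cr3 o b a.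
Proof. unfold cr3, cross, vsub; simpl; ring. Qed.

Ltac crz H := first [rewrite cr3_aa in H|rewrite cr3_ao in H|rewrite cr3_oa in H]; lra.

Lemma tri_ineq P o a b c : convex_position P -> In o P -> In a P -> In b P -> In c P ->
  cr3 o a b > 0 -> cr3 o b c > 0 -> cr3 o a c > 0 ->
  cr3 o b c + cr3 o a b > cr3 o a c.
Proof.
  intros Hcv Ho Ha Hb Hc Hab Hbc Hac.
  destruct (Rlt_or_le (cr3 o a c) (cr3 o b c + cr3 o a b)) as [H|H]; [lra|exfalso].
  assert (HN : NoDup [a; c; o]).
  { constructor. { intros [E|[E|[]]]; subst; crz Hac. }
    constructor. { intros [E|[]]; subst; crz Hbc. }
    constructor; [intros []|constructor]. }
  assert (HD : forall s, In s [a; c; o] -> In s P /\ s <> b).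
  { intros s [E|[E|[E|[]]]]; subst; split; auto; intro E.
    + subst; crz Hab.
    + subst; crz Hbc.
    + subst; crz Hab. }
  set (K := cr3 o a c) in *.
  set (al := cr3 o b c / K). set (ga := cr3 o a b / K).
  assert (Hal : 0 <= al) by (unfold al; apply Rlt_le, Rdiv_lt_0_compat; lra).
  assert (Hga : 0 <= ga) by (unfold ga; apply Rlt_le, Rdiv_lt_0_compat; lra).
  assert (Hs : al + ga <= 1).
  { unfold al, ga. apply (Rmult_le_reg_r K); [lra|]. field_simplify; lra. }
  apply (not_in_hull P b [a; c; o]); auto.
  - exists [al; ga; 1 - al - ga]. split; [reflexivity|]. split.
    { constructor; [lra|constructor; [lra|constructor; [lra|constructor]]]. }
    split; [simpl; ring|].
    unfold al, ga, K, cr3 in *. destruct a as [a1 a2], b as [b1 b2], c as [c1 c2], o as [o1 o2].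
    unfold cross, vsub in *; simpl in *. f_equal; field; lra.
Qed.

Definition seg_cross (a c b d : pt) : Prop :=
  exists s t, 0 < s < 1 /\ 0 < t < 1 /\
    fst a + s * (fst c - fst a) = fst b + t * (fst d - fst b) /\
    snd a + s * (snd c - snd a) = snd b + t * (snd d - snd b) /\
    cross (vsub c a) (vsub d b) <> 0.

Lemma seg_cross_swap a c b d : seg_cross a c b d -> seg_cross b d a c.
Proof.
  intros (s & t & Hs & Ht & E1 & E2 & Hc). exists t, s. repeat split; try lra.
  intro E. apply Hc. unfold cross, vsub in *; simpl in *. lra.
Qed.

Lemma cross_lemma o a b c d :
  cr3 o a b > 0 -> cr3 o a c > 0 -> cr3 o a d > 0 ->
  cr3 o b c > 0 -> cr3 o b d > 0 -> cr3 o c d > 0 ->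
  cr3 o b c + cr3 o a b > cr3 o a c ->
  cr3 o c d + cr3 o b c > cr3 o b d ->
  seg_cross a c b d.
Proof.
  intros Hab Hac Had Hbc Hbd Hcd H1 H2.
  set (pab := cr3 o a b) in *. set (pac := cr3 o a c) in *. set (pad := cr3 o a d) in *.
  set (pbc := cr3 o b c) in *. set (pbd := cr3 o b d) in *. set (pcd := cr3 o c d) in *.
  assert (Plk : pab * pcd - pac * pbd + pad * pbc = 0).
  { unfold pab, pac, pad, pbc, pbd, pcd, cr3, cross, vsub; simpl; ring. }
  assert (Ei : pcd - pad + pac > 0).
  { assert (pad * pbc < (pcd + pac) * pbc); [|nra].
    assert (pac * (pbd - pbc) < pac * pcd) by (apply Rmult_lt_compat_l; lra).
    assert (pac * pcd < pcd * (pab + pbc)) by nra. nra. }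
  assert (Eii : pbd - pad + pab > 0).
  { assert (pad * pbc < (pab + pbd) * pbc); [|nra].
    assert (pbd * (pac - pbc) < pbd * pab) by (apply Rmult_lt_compat_l; lra).
    assert (pab * pbd < pab * (pcd + pbc)) by (apply Rmult_lt_compat_l; lra). nra. }
  assert (EDen : cross (vsub c a) (vsub d b) = pcd + pbc - pad + pab).
  { unfold pab, pac, pad, pbc, pbd, pcd, cr3, cross, vsub; simpl; ring. }
  assert (ENS : cross (vsub b a) (vsub d b) = pbd - pad + pab).
  { unfold pab, pac, pad, pbc, pbd, pcd, cr3, cross, vsub; simpl; ring. }
  assert (ENT : cross (vsub b a) (vsub c a) = pbc + pab - pac).
  { unfold pab, pac, pad, pbc, pbd, pcd, cr3, cross, vsub; simpl; ring. }
  set (Den := pcd + pbc - pad + pab) in *.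
  assert (HD : Den > 0) by (unfold Den; lra).
  exists ((pbd - pad + pab) / Den), ((pbc + pab - pac) / Den).
  split; [split|split; [split|split; [|split]]].
  - apply Rdiv_lt_0_compat; lra.
  - apply (Rmult_lt_reg_r Den); [lra|]. field_simplify; [|lra]. unfold Den; lra.
  - apply Rdiv_lt_0_compat; lra.
  - apply (Rmult_lt_reg_r Den); [lra|]. field_simplify; [|lra]. unfold Den; lra.
  - rewrite <- ENS, <- ENT, <- EDen. destruct a, b, c, d. unfold cross, vsub; simpl.
    field. rewrite <- EDen in HD. unfold cross, vsub in HD; simpl in HD. lra.
  - rewrite <- ENS, <- ENT, <- EDen. destruct a, b, c, d. unfold cross, vsub; simpl.
    field. rewrite <- EDen in HD. unfold cross, vsub in HD; simpl in HD. lra.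
  - rewrite EDen. lra.
Qed.

Lemma alg1 a1 a2 b1 b2 s t :
  a1*a1 + a2*a2 = 1 -> b1*b1 + b2*b2 = 1 -> a1*b2 - a2*b1 <> 0 ->
  0 < s < 1 -> 0 < t < 1 ->
  ((1-s)*a1 + t*b1)*((1-s)*a1 + t*b1) + ((1-s)*a2 + t*b2)*((1-s)*a2 + t*b2) = 1 ->
  ((1-t)*b1 + s*a1)*((1-t)*b1 + s*a1) + ((1-t)*b2 + s*a2)*((1-t)*b2 + s*a2) < 1.
Proof.
  intros HA HB Hc Hs Ht H.
  set (c := a1*b1 + a2*b2).
  assert (Hl : c*c + (a1*b2 - a2*b1)*(a1*b2-a2*b1) = 1).
  { unfold c. transitivity ((a1*a1+a2*a2)*(b1*b1+b2*b2)); [ring|]. rewrite HA, HB; ring. }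
  assert (Hc2 : c * c < 1).
  { assert (0 < (a1*b2 - a2*b1)*(a1*b2-a2*b1)) by (apply Rsqr_pos_lt in Hc; unfold Rsqr in Hc; lra). lra. }
  assert (Hc1 : c < 1) by nra.
  assert (H' : (1-s)*(1-s) + t*t + 2*(1-s)*t*c = 1).
  { assert (X : ((1-s)*a1 + t*b1)*((1-s)*a1 + t*b1) + ((1-s)*a2 + t*b2)*((1-s)*a2 + t*b2) =
      (1-s)*(1-s)*(a1*a1+a2*a2) + t*t*(b1*b1+b2*b2) + 2*(1-s)*t*c) by (unfold c; ring).
    rewrite HA, HB in X. lra. }
  assert (Hts : t > s).
  { assert (P0 : 0 < (1-s)*t) by (apply Rmult_lt_0_compat; lra).
    assert (P1 : (1-s)*t*c < (1-s)*t*1) by (apply Rmult_lt_compat_l; lra).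
    assert (P2 : 1 < (1-s+t)*(1-s+t)) by nra.
    destruct (Rle_or_lt (1-s+t) 1) as [Q|Q]; [|lra].
    assert ((1-s+t)*(1-s+t) <= 1*1) by (apply Rmult_le_compat; lra). lra. }
  assert (G : ((1-t)*b1 + s*a1)*((1-t)*b1 + s*a1) + ((1-t)*b2 + s*a2)*((1-t)*b2 + s*a2)
              = (1-t)*(1-t) + s*s + 2*(1-t)*s*c).
  { unfold c. transitivity ((1-t)*(1-t)*(b1*b1+b2*b2) + s*s*(a1*a1+a2*a2) + 2*(1-t)*s*(a1*b1+a2*b2)).
    - ring.
    - rewrite HA, HB; ring. }
  rewrite G.
  assert (P0 : 0 <= (1-t)*s) by (apply Rmult_le_pos; lra).
  assert (P1 : (1-t)*s*c <= (1-t)*s*1) by (apply Rmult_le_compat_l; lra).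
  assert (P2 : (1-t+s)*(1-t+s) < 1*1) by (apply Rmult_le_0_lt_compat; lra).
  nra.
Qed.

Lemma alg2 f1 f2 g1 g2 s t :
  f1*f1 + f2*f2 = 1 -> 0 < s < 1 -> 0 < t < 1 ->
  ((1-t)*g1 + s*f1)*((1-t)*g1 + s*f1) + ((1-t)*g2 + s*f2)*((1-t)*g2 + s*f2) = 1 ->
  ((1-s)*f1 + t*g1)*((1-s)*f1 + t*g1) + ((1-s)*f2 + t*g2)*((1-s)*f2 + t*g2) = 1 ->
  g1*g1 + g2*g2 >= 1.
Proof.
  intros HF Hs Ht E1 E2.
  destruct (Rlt_or_le (g1*g1+g2*g2) 1) as [Hlt|]; [exfalso|lra].
  set (L2 := g1*g1+g2*g2) in *.
  assert (HL2 : 0 <= L2) by (unfold L2; nra).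
  set (L := sqrt L2).
  assert (HL : L * L = L2) by (apply sqrt_sqrt; auto).
  assert (HL0 : 0 <= L) by apply sqrt_pos.
  set (g := f1*g1 + f2*g2).
  assert (Hg : g * g <= L2).
  { assert (Y : g*g + (f1*g2-f2*g1)*(f1*g2-f2*g1) = (f1*f1+f2*f2)*L2) by (unfold g, L2; ring).
    rewrite HF in Y. assert (0 <= (f1*g2-f2*g1)*(f1*g2-f2*g1)) by apply Rle_0_sqr. lra. }
  assert (Hg2 : g <= L).
  { destruct (Rle_or_lt g L) as [|Q]; auto.
    assert (L*L < g*g) by (apply Rmult_le_0_lt_compat; lra). lra. }
  assert (E1' : (1-t)*(1-t)*L2 + s*s + 2*(1-t)*s*g = 1).
  { assert (X : ((1-t)*g1 + s*f1)*((1-t)*g1 + s*f1) + ((1-t)*g2 + s*f2)*((1-t)*g2 + s*f2) =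
      (1-t)*(1-t)*L2 + s*s*(f1*f1+f2*f2) + 2*(1-t)*s*g) by (unfold L2, g; ring).
    rewrite HF in X. lra. }
  assert (E2' : (1-s)*(1-s) + t*t*L2 + 2*(1-s)*t*g = 1).
  { assert (X : ((1-s)*f1 + t*g1)*((1-s)*f1 + t*g1) + ((1-s)*f2 + t*g2)*((1-s)*f2 + t*g2) =
      (1-s)*(1-s)*(f1*f1+f2*f2) + t*t*L2 + 2*(1-s)*t*g) by (unfold L2, g; ring).
    rewrite HF in X. lra. }
  assert (A1 : 1 <= ((1-t)*L + s) * ((1-t)*L + s)).
  { assert (X : ((1-t)*L + s) * ((1-t)*L + s) = (1-t)*(1-t)*(L*L) + s*s + 2*(1-t)*s*L) by ring.
    rewrite HL in X. assert (0 <= (1-t)*s) by (apply Rmult_le_pos; lra).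
    assert ((1-t)*s*g <= (1-t)*s*L) by (apply Rmult_le_compat_l; lra). lra. }
  assert (A2 : 1 <= ((1-s) + t*L) * ((1-s) + t*L)).
  { assert (X : ((1-s) + t*L) * ((1-s) + t*L) = (1-s)*(1-s) + t*t*(L*L) + 2*(1-s)*t*L) by ring.
    rewrite HL in X. assert (0 <= (1-s)*t) by (apply Rmult_le_pos; lra).
    assert ((1-s)*t*g <= (1-s)*t*L) by (apply Rmult_le_compat_l; lra). lra. }
  assert (B1 : 1 <= (1-t)*L + s).
  { destruct (Rle_or_lt 1 ((1-t)*L + s)) as [|Q]; auto.
    assert (0 <= (1-t)*L) by (apply Rmult_le_pos; lra).
    assert (((1-t)*L + s) * ((1-t)*L + s) < 1*1) by (apply Rmult_le_0_lt_compat; lra). lra. }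
  assert (B2 : 1 <= (1-s) + t*L).
  { destruct (Rle_or_lt 1 ((1-s) + t*L)) as [|Q]; auto.
    assert (0 <= t*L) by (apply Rmult_le_pos; lra).
    assert (((1-s) + t*L) * ((1-s) + t*L) < 1*1) by (apply Rmult_le_0_lt_compat; lra). lra. }
  assert (1 <= L) by lra.
  assert (1*1 <= L*L) by (apply Rmult_le_compat; lra). lra.
Qed.

Definition d2 (a b : pt) : R := dot (vsub a b) (vsub a b).

Lemma ALG x y z w p q :
  d2 x z = 1 -> d2 w y = 1 -> d2 w z = 1 -> d2 x p = 1 -> d2 q p = 1 -> d2 q y = 1 ->
  seg_cross y w z x -> seg_cross p q y x -> False.
Proof.
  destruct x as [x1 x2], y as [y1 y2], z as [z1 z2], w as [w1 w2], p as [p1 p2], q as [q1 q2].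
  unfold d2, dot, vsub; simpl.
  intros Hxz Hwy Hwz Hxp Hqp Hqy (s & t & Hs & Ht & E1 & E2 & Hc) (s' & t' & Hs' & Ht' & F1 & F2 & _).
  unfold cross, vsub in Hc; simpl in *.
  assert (A : (x1-y1)*(x1-y1) + (x2-y2)*(x2-y2) < 1).
  { assert (X1 : x1 - y1 = (1-t)*(x1-z1) + s*(w1-y1)) by lra.
    assert (X2 : x2 - y2 = (1-t)*(x2-z2) + s*(w2-y2)) by lra.
    assert (W1 : w1 - z1 = (1-s)*(w1-y1) + t*(x1-z1)) by lra.
    assert (W2 : w2 - z2 = (1-s)*(w2-y2) + t*(x2-z2)) by lra.
    rewrite X1, X2. rewrite W1, W2 in Hwz.
    apply (alg1 (w1-y1) (w2-y2) (x1-z1) (x2-z2) s t); auto. }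
  assert (B : (x1-y1)*(x1-y1) + (x2-y2)*(x2-y2) >= 1).
  { assert (X1 : x1 - p1 = (1-t')*(x1-y1) + s'*(q1-p1)) by lra.
    assert (X2 : x2 - p2 = (1-t')*(x2-y2) + s'*(q2-p2)) by lra.
    assert (W1 : q1 - y1 = (1-s')*(q1-p1) + t'*(x1-y1)) by lra.
    assert (W2 : q2 - y2 = (1-s')*(q2-p2) + t'*(x2-y2)) by lra.
    rewrite X1, X2 in Hxp. rewrite W1, W2 in Hqy.
    apply (alg2 (q1-p1) (q2-p2) (x1-y1) (x2-y2) s' t'); auto. }
  lra.
Qed.

Lemma VU P pl pr u v : convex_position P -> antipodal P pl pr -> In pl P -> In pr P ->
  In u P -> In v P -> above pl pr u -> below pl pr v -> cr3 pl v u > 0.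
Proof.
  intros Hcv (nv & Hnv & Hant) Hpl Hpr Hu Hv Hab Hbe.
  destruct (Hant u Hu) as [Hu1 Hu2]. destruct (Hant v Hv) as [Hv1 Hv2].
  destruct (Hant pr Hpr) as [Hr1 Hr2].
  unfold above, below in *.
  destruct (Rlt_or_le 0 (cr3 pl v u)) as [|Hle]; auto. exfalso.
  destruct nv as [n1 n2], pl as [l1 l2], pr as [r1 r2], u as [u1 u2], v as [v1 v2].
  unfold cr3, dot, cross, vsub in *; simpl in *.
  set (e1 := r1 - l1) in *. set (e2 := r2 - l2) in *.
  set (a1 := v1 - l1) in *. set (a2 := v2 - l2) in *.
  set (b1 := u1 - l1) in *. set (b2 := u2 - l2) in *.
  assert (Ne : n1*e1 + n2*e2 >= 0) by (unfold e1, e2; lra).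
  assert (Na : n1*a1 + n2*a2 >= 0) by (unfold a1, a2; lra).
  assert (Nb : n1*b1 + n2*b2 >= 0) by (unfold b1, b2; lra).
  assert (Nbe : n1*b1 + n2*b2 <= n1*e1 + n2*e2) by (unfold b1, b2, e1, e2; lra).
  assert (Ne' : n1*e1 + n2*e2 > 0).
  { destruct (Rle_lt_or_eq_dec 0 (n1*e1+n2*e2)) as [|E0]; [lra| |]; auto. exfalso.
    assert (Eb : n1*b1 + n2*b2 = 0) by lra.
    assert (I1 : n1 * (e1*b2 - e2*b1) = (n1*e1+n2*e2)*b2 - (n1*b1+n2*b2)*e2) by ring.
    assert (I2 : n2 * (e1*b2 - e2*b1) = (n1*b1+n2*b2)*e1 - (n1*e1+n2*e2)*b1) by ring.
    rewrite <- E0, Eb in I1, I2.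
    assert (n1 = 0) by (apply (Rmult_eq_reg_r (e1*b2 - e2*b1)); lra).
    assert (n2 = 0) by (apply (Rmult_eq_reg_r (e1*b2 - e2*b1)); lra).
    apply Hnv. subst; auto. }
  assert (Id : (a1*b2 - a2*b1) * (n1*e1+n2*e2) =
     (e1*b2 - e2*b1)*(n1*a1+n2*a2) - (e1*a2 - e2*a1)*(n1*b1+n2*b2)) by ring.
  assert (R1 : 0 <= (e1*b2 - e2*b1)*(n1*a1+n2*a2)) by (apply Rmult_le_pos; lra).
  assert (R2 : 0 <= -(e1*a2 - e2*a1)*(n1*b1+n2*b2)) by (apply Rmult_le_pos; lra).
  assert (Z : a1*b2 - a2*b1 = 0).
  { destruct (Rle_lt_or_eq_dec _ _ Hle) as [Q|Q]; auto.
    assert ((a1*b2 - a2*b1) * (n1*e1+n2*e2) < 0).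
    { assert (0 < -(a1*b2-a2*b1) * (n1*e1+n2*e2)) by (apply Rmult_lt_0_compat; lra). lra. }
    lra. }
  set (ea := e1*a2 - e2*a1) in *. set (eb := e1*b2 - e2*b1) in *.
  set (D := ea - eb).
  assert (HD : D < 0) by (unfold D; lra).
  set (lam := ea / D).
  assert (L0 : 0 < lam). { replace lam with ((-ea)/(-D)) by (unfold lam; field; lra). apply Rdiv_lt_0_compat; lra. }
  assert (L1 : 0 < 1 - lam). { replace (1 - lam) with (eb/(-D)) by (unfold lam, D; field; lra). apply Rdiv_lt_0_compat; lra. }
  assert (HD2 : e1*a2 - e2*a1 - (e1*b2 - e2*b1) < 0) by (unfold D, ea, eb in HD; lra).
  assert (K1 : lam * b1 + (1 - lam) * a1 = (-e1) * (a1*b2 - a2*b1) / D) by (unfold lam, D, ea, eb; field; lra).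
  assert (K2 : lam * b2 + (1 - lam) * a2 = (-e2) * (a1*b2 - a2*b1) / D) by (unfold lam, D, ea, eb; field; lra).
  rewrite Z in K1, K2. replace ((-e1)*0/D) with 0 in K1 by (field; lra).
  replace ((-e2)*0/D) with 0 in K2 by (field; lra).
  unfold ea, eb, a1, a2, b1, b2 in *.
  apply (not_in_hull P (l1,l2) [(u1,u2); (v1,v2)]); auto.
  - constructor; [|constructor; [intros []|constructor]].
    intros [E|[]]. injection E as E E'. subst. lra.
  - intros s [E|[E|[]]]; subst; split; auto; intro E; injection E as E E'; subst; lra.
  - exists [lam; 1 - lam]. split; [reflexivity|]. split.
    { constructor; [lra|constructor; [lra|constructor]]. }
    split; [simpl; ring|].
    simpl. f_equal; lra.
Qed.

Lemma quad_cross P pl a b c d : convex_position P ->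
  In pl P -> In a P -> In b P -> In c P -> In d P ->
  cr3 pl a b > 0 -> cr3 pl a c > 0 -> cr3 pl a d > 0 ->
  cr3 pl b c > 0 -> cr3 pl b d > 0 -> cr3 pl c d > 0 ->
  seg_cross a c b d.
Proof.
  intros Hcv Hl Ha Hb Hc Hd Hab Hac Had Hbc Hbd Hcd.
  apply (cross_lemma pl); auto.
  - apply (tri_ineq P); auto.
  - apply (tri_ineq P); auto.
Qed.

Lemma up_facts P pl pr us : upper_labelling P pl pr us -> forall i, (i < length us)%nat ->
  In (nth i us p0) P /\ above pl pr (nth i us p0).
Proof. intros (_ & H & _) i Hi. apply H. apply nth_In; auto. Qed.
Lemma lo_facts P pl pr vs : lower_labelling P pl pr vs -> forall i, (i < length vs)%nat ->
  In (nth i vs p0) P /\ below pl pr (nth i vs p0).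
Proof. intros (_ & H & _) i Hi. apply H. apply nth_In; auto. Qed.
Lemma up_ord P pl pr us : upper_labelling P pl pr us -> forall i j, (i < j)%nat -> (j < length us)%nat ->
  cr3 pl (nth i us p0) (nth j us p0) > 0.
Proof. intros (_ & _ & H) i j Hij Hj. apply H; auto. Qed.
Lemma lo_ord P pl pr vs : lower_labelling P pl pr vs -> forall i j, (i < j)%nat -> (j < length vs)%nat ->
  cr3 pl (nth j vs p0) (nth i vs p0) > 0.
Proof. intros (_ & _ & H) i j Hij Hj. rewrite cr3_anti. unfold cr3. specialize (H i j Hij Hj). lra. Qed.

Definition hidx (i j : nat) : bool :=
  match i, j with
  | 0, 0 | 3, 0 | 1, 1 | 3, 1 | 0, 2 | 1, 2 => true
  | _, _ => false
  end.
Definition Hobg : obg := mkObg 6 3 (fun i j => hidx i j = true).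

Lemma udg_d2 P a b : udg P a b -> d2 a b = 1.
Proof. intros (_ & _ & E). exact E. Qed.

Lemma not_udg : ~ in_G_UDG Hobg.
Proof.
  intros (P & Hcv & pl & pr & us & vs & side & Hpl & Hpr & Hne & Hant & Hup & Hlo & Hvs & Hiso).
  assert (VU' : forall u v, In u P -> In v P -> above pl pr u -> below pl pr v -> cr3 pl v u > 0)
    by (intros; eapply VU; eauto).
  destruct Hiso as [(Hn & Hm & Hadj) | (Hn & Hm & Hadj)]; simpl in Hn, Hm, Hadj.
  - assert (E : forall i j, hidx i j = true -> (i < 6)%nat -> (j < 3)%nat ->
                d2 (nth i us p0) (nth j vs p0) = 1).
    { intros i j Hij Hi Hj. destruct (proj1 (Hadj i j Hi Hj) Hij) as [(_ & _ & G & _) _].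
      eapply udg_d2; eauto. }
    assert (UF := up_facts P pl pr us Hup). assert (VF := lo_facts P pl pr vs Hlo).
    assert (UO := up_ord P pl pr us Hup). assert (VO := lo_ord P pl pr vs Hlo).
    rewrite <- Hn in UF, UO. rewrite <- Hm in VF, VO.
    destruct (UF 0%nat ltac:(lia)) as [Iu0 Au0]. destruct (UF 1%nat ltac:(lia)) as [Iu1 Au1].
    destruct (UF 3%nat ltac:(lia)) as [Iu3 Au3].
    destruct (VF 0%nat ltac:(lia)) as [Iv0 Bv0]. destruct (VF 1%nat ltac:(lia)) as [Iv1 Bv1].
    destruct (VF 2%nat ltac:(lia)) as [Iv2 Bv2].
    apply (ALG (nth 0 us p0) (nth 1 vs p0) (nth 2 vs p0) (nth 1 us p0) (nth 0 vs p0) (nth 3 us p0));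
      try (apply E; [reflexivity|lia|lia]).
    + apply seg_cross_swap. apply (quad_cross P pl); auto; apply VO || apply UO; lia.
    + apply seg_cross_swap. apply (quad_cross P pl); auto; apply VO || apply UO; lia.
  - assert (E : forall i j, hidx i j = true -> (i < 6)%nat -> (j < 3)%nat ->
                d2 (nth (6 - S i) us p0) (nth (3 - S j) vs p0) = 1).
    { intros i j Hij Hi Hj. destruct (proj1 (Hadj i j Hi Hj) Hij) as [(_ & _ & G & _) _].
      rewrite <- Hn, <- Hm in G. eapply udg_d2; eauto. }
    assert (UF := up_facts P pl pr us Hup). assert (VF := lo_facts P pl pr vs Hlo).
    assert (UO := up_ord P pl pr us Hup). assert (VO := lo_ord P pl pr vs Hlo).
    rewrite <- Hn in UF, UO. rewrite <- Hm in VF, VO.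
    destruct (UF 5%nat ltac:(lia)) as [Iu5 Au5]. destruct (UF 4%nat ltac:(lia)) as [Iu4 Au4].
    destruct (UF 2%nat ltac:(lia)) as [Iu2 Au2].
    destruct (VF 0%nat ltac:(lia)) as [Iv0 Bv0]. destruct (VF 1%nat ltac:(lia)) as [Iv1 Bv1].
    destruct (VF 2%nat ltac:(lia)) as [Iv2 Bv2].
    apply (ALG (nth 5 us p0) (nth 1 vs p0) (nth 0 vs p0) (nth 4 us p0) (nth 2 vs p0) (nth 2 us p0));
      [apply (E 0%nat 2%nat)|apply (E 1%nat 1%nat)|apply (E 1%nat 2%nat)|apply (E 0%nat 0%nat)|apply (E 3%nat 0%nat)|apply (E 3%nat 1%nat)| |];
      try reflexivity; try lia.
    + apply (quad_cross P pl); auto; apply VO || apply UO; lia.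
    + apply (quad_cross P pl); auto; apply VO || apply UO; lia.
Qed.

Lemma sqpos (a b : pt) : a <> b -> dot (vsub a b) (vsub a b) > 0.
Proof.
  destruct a as [a1 a2], b as [b1 b2]; unfold dot, vsub; simpl. intros Hne.
  destruct (Rlt_or_le 0 ((a1-b1)*(a1-b1) + (a2-b2)*(a2-b2))) as [|Hle]; auto. exfalso.
  apply Hne. assert (0 <= (a1-b1)*(a1-b1)) by apply Rle_0_sqr.
  assert (0 <= (a2-b2)*(a2-b2)) by apply Rle_0_sqr.
  assert (E1 : (a1-b1)*(a1-b1) = 0) by lra. assert (E2 : (a2-b2)*(a2-b2) = 0) by lra.
  apply Rmult_integral in E1. apply Rmult_integral in E2.
  f_equal; lra.
Qed.

Lemma udg_lgg P : is_LGG P (udg P).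
Proof.
  split; [|split].
  - intros p q (Hp & Hq & E). repeat split; auto. intro Heq. subst.
    unfold dot, vsub in E; simpl in E. lra.
  - intros p q (Hp & Hq & E). repeat split; auto. rewrite <- E.
    unfold dot, vsub; simpl; ring.
  - intros u v (_ & _ & Euv) w Hwu Hwv [(_ & _ & Euw)|(_ & _ & Evw)].
    + assert (Hp := sqpos w v Hwv).
      destruct u as [u1 u2], v as [v1 v2], w as [w1 w2]; unfold dot, vsub in *; simpl in *. nra.
    + assert (Hp := sqpos w u Hwu).
      destruct u as [u1 u2], v as [v1 v2], w as [w1 w2]; unfold dot, vsub in *; simpl in *. nra.
Qed.

Lemma part1 : forall H : obg, in_G_UDG H -> in_G_LGG H.
Proof. intros H (P & HP). exists P, (udg P). split; auto. apply udg_lgg. Qed.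

Definition ulist : list pt := [(107,209); (68,225); (26,235); (-62,208); (-102,192); (-104,183)].
Definition vlist : list pt := [(107,-161); (56,-183); (-59,-160)].
Definition PLp : pt := (-110, 0).
Definition PRp : pt := (113, 0).
Definition Pex : list pt := [PRp] ++ ulist ++ [PLp] ++ rev vlist.

Definition Uf i := nth i ulist p0.
Definition Vf j := nth j vlist p0.

Definition eidx (i j : nat) : bool :=
  match i, j with
  | 0, 2 | 1, 2 | 0, 0 | 3, 0 | 1, 1 | 3, 1 | 2, 2 | 4, 1 | 5, 0 => true
  | _, _ => false
  end.

Definition adjex (p q : pt) : Prop :=
  exists i j, (i < 6)%nat /\ (j < 3)%nat /\ eidx i j = true /\
    ((p = Uf i /\ q = Vf j) \/ (p = Vf j /\ q = Uf i)).

Ltac dI i := destruct i as [|[|[|[|[|[|i]]]]]].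
Ltac dJ j := destruct j as [|[|[|j]]].

Lemma Uf_pos i : (i < 6)%nat -> snd (Uf i) > 0.
Proof. intros. dI i; try lia; unfold Uf; simpl; lra. Qed.
Lemma Vf_neg j : (j < 3)%nat -> snd (Vf j) < 0.
Proof. intros. dJ j; try lia; unfold Vf; simpl; lra. Qed.
Lemma UV_ne i j : (i < 6)%nat -> (j < 3)%nat -> Uf i <> Vf j.
Proof. intros Hi Hj E. assert (A := Uf_pos i Hi). assert (B := Vf_neg j Hj). rewrite E in A. lra. Qed.
Lemma Uf_inj i i' : (i < 6)%nat -> (i' < 6)%nat -> Uf i = Uf i' -> i = i'.
Proof.
  intros Hi Hi'. dI i; try lia; dI i'; try lia; unfold Uf; simpl; intro E; auto;
    injection E; intros; lra.
Qed.
Lemma Vf_inj j j' : (j < 3)%nat -> (j' < 3)%nat -> Vf j = Vf j' -> j = j'.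
Proof.
  intros Hj Hj'. dJ j; try lia; dJ j'; try lia; unfold Vf; simpl; intro E; auto;
    injection E; intros; lra.
Qed.

Lemma adj_UV i j : (i < 6)%nat -> (j < 3)%nat -> adjex (Uf i) (Vf j) -> eidx i j = true.
Proof.
  intros Hi Hj (i' & j' & Hi' & Hj' & E & [[E1 E2]|[E1 E2]]).
  - apply Uf_inj in E1; auto. apply Vf_inj in E2; auto. subst; auto.
  - exfalso. eapply UV_ne; [exact Hi|exact Hj'|]. exact E1.
Qed.

Lemma N1 i j j' : eidx i j = true -> eidx i j' = true -> j <> j' ->
  dot (vsub (Vf j') (Uf i)) (vsub (Vf j') (Vf j)) > 0.
Proof.
  intros. dI i; dJ j; try discriminate; dJ j'; try discriminate; try congruence;
  unfold Uf, Vf, dot, vsub; simpl; lra.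
Qed.

Lemma N2 i i' j : eidx i j = true -> eidx i' j = true -> i <> i' ->
  dot (vsub (Uf i') (Uf i)) (vsub (Uf i') (Vf j)) > 0.
Proof.
  intros. dJ j; dI i; try discriminate; dI i'; try discriminate; try congruence;
  unfold Uf, Vf, dot, vsub; simpl; lra.
Qed.

Lemma N3 i j : eidx i j = true -> acute (Uf i) (Vf j) (vright PRp vlist j).
Proof.
  intros. dI i; dJ j; try discriminate; unfold acute, Uf, Vf, dot, vsub; simpl; lra.
Qed.

Lemma Uf_in i : (i < 6)%nat -> In (Uf i) Pex.
Proof. intros. dI i; try lia; unfold Uf, Pex; simpl; tauto. Qed.
Lemma Vf_in j : (j < 3)%nat -> In (Vf j) Pex.
Proof. intros. dJ j; try lia; unfold Vf, Pex; simpl; tauto. Qed.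

Lemma LGGc i j : (i < 6)%nat -> (j < 3)%nat -> eidx i j = true -> forall w, w <> Uf i -> w <> Vf j ->
  (adjex (Uf i) w \/ adjex (Vf j) w) -> dot (vsub w (Uf i)) (vsub w (Vf j)) > 0.
Proof.
  intros Hi Hj Hij w Hw1 Hw2 [(i' & j' & Hi' & Hj' & E & [[E1 E2]|[E1 E2]])|(i' & j' & Hi' & Hj' & E & [[E1 E2]|[E1 E2]])].
  - apply Uf_inj in E1; auto. subst i' w. apply N1; auto; intro; subst; auto.
  - exfalso. eapply UV_ne; [exact Hi|exact Hj'|exact E1].
  - exfalso. eapply UV_ne; [exact Hi'|exact Hj|symmetry; exact E1].
  - apply Vf_inj in E1; auto. subst j' w. apply N2; auto; intro; subst; auto.
Qed.

Lemma lgg_ex : is_LGG Pex adjex.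
Proof.
  split; [|split].
  - intros p q (i & j & Hi & Hj & E & [[-> ->]|[-> ->]]).
    + repeat split; [apply Uf_in|apply Vf_in|apply UV_ne]; auto.
    + split; [apply Vf_in; auto|]. split; [apply Uf_in; auto|].
      intro E'. symmetry in E'. revert E'. apply UV_ne; auto.
  - intros p q (i & j & Hi & Hj & E & H). exists i, j. repeat split; auto. tauto.
  - intros u v (i & j & Hi & Hj & E & [[-> ->]|[-> ->]]) w Hwu Hwv Hadj.
    + apply LGGc; auto.
    + assert (X := LGGc i j Hi Hj E w Hwv Hwu ltac:(tauto)).
      unfold dot, vsub in *; simpl in *. lra.
Qed.

Lemma sep_hull L q (n : pt) c : dot n q > c -> Forall (fun r => dot n r <= c) L -> ~ in_hull L q.
Proof.
  intros Hq HL (ws & Hlen & Hpos & Hsum & Heq).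
  assert (K : forall ws L, length ws = length L -> Forall (fun w => 0 <= w) ws ->
            Forall (fun r => dot n r <= c) L -> dot n (wsum ws L) <= sumR ws * c).
  { clear. induction ws as [|w ws IH]; intros L Hl Hp HL; destruct L as [|r L]; simpl in *; try discriminate.
    - unfold dot; simpl; lra.
    - inversion Hp; inversion HL; subst. injection Hl as Hl.
      specialize (IH L Hl ltac:(auto) ltac:(auto)).
      unfold dot in *; simpl in *.
      assert (w * (fst n * fst r + snd n * snd r) <= w * c) by (apply Rmult_le_compat_l; auto).
      nra. }
  specialize (K ws L Hlen Hpos HL). rewrite <- Heq, sumR_fold in *. rewrite Hsum in K. lra.
Qed.

Ltac inlist H := simpl in H; repeat (destruct H as [H|H]; [subst|]); try contradiction.

Ltac nodup_tac := repeat (apply NoDup_cons;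
  [simpl; let Hin := fresh in intro Hin;
   repeat (destruct Hin as [Hin|Hin]; [injection Hin; intros; lra|]); exact Hin|]);
  apply NoDup_nil.

Ltac forall_tac := apply Forall_forall; let r := fresh in let Hr := fresh in intros r Hr;
  simpl in Hr; repeat (destruct Hr as [Hr|Hr]; [subst r; unfold dot; simpl; lra|]); contradiction.

Lemma convex_ex : convex_position Pex.
Proof.
  split.
  - unfold Pex, ulist, vlist, PLp, PRp; simpl. nodup_tac.
  - intros i Hi. unfold Pex in Hi; simpl in Hi.
    do 11 (destruct i as [|i]; [
      simpl;
      first
      [ apply (sep_hull _ _ (370,0) 39590); [unfold dot; simpl; lra| forall_tac]
      | apply (sep_hull _ _ (225,45) 25425); [unfold dot; simpl; lra| forall_tac]
      | apply (sep_hull _ _ (26,81) 19711); [unfold dot; simpl; lra| forall_tac]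
      | apply (sep_hull _ _ (-17,130) 28094); [unfold dot; simpl; lra| forall_tac]
      | apply (sep_hull _ _ (-43,128) 28962); [unfold dot; simpl; lra| forall_tac]
      | apply (sep_hull _ _ (-25,42) 10286); [unfold dot; simpl; lra| forall_tac]
      | apply (sep_hull _ _ (-192,8) 21120); [unfold dot; simpl; lra| forall_tac]
      | apply (sep_hull _ _ (-343,-45) 27437); [unfold dot; simpl; lra| forall_tac]
      | apply (sep_hull _ _ (-183,-166) 20130); [unfold dot; simpl; lra| forall_tac]
      | apply (sep_hull _ _ (-1,-166) 26619); [unfold dot; simpl; lra| forall_tac]
      | apply (sep_hull _ _ (183,-57) 20679); [unfold dot; simpl; lra| forall_tac] ] |]).
    lia.
Qed.

Lemma antip_ex : antipodal Pex PLp PRp.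
Proof.
  exists (1, 0). split.
  - intro E. injection E; intros; lra.
  - intros q Hq. unfold Pex, ulist, vlist, PLp, PRp in *.
    simpl in Hq. repeat (destruct Hq as [Hq|Hq]; [subst q; unfold dot; simpl; lra|]). contradiction.
Qed.

Lemma upper_ex : upper_labelling Pex PLp PRp ulist.
Proof.
  split; [|split].
  - unfold ulist; nodup_tac.
  - intros q; split.
    + intros Hq. unfold Pex, ulist, vlist, PLp, PRp, above, cross, vsub in *.
      simpl in Hq. repeat (destruct Hq as [Hq|Hq]; [subst q; simpl; split; [tauto|lra]|]). contradiction.
    + intros [Hq Ha]. unfold Pex, ulist, vlist, PLp, PRp, above, cross, vsub in *.
      simpl in Hq. repeat (destruct Hq as [Hq|Hq]; [subst q; simpl in *; first [tauto|lra]|]). contradiction.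
  - intros i j Hij Hj. unfold ulist in Hj; simpl in Hj.
    dI i; dI j; try lia; unfold ulist, PLp, cross, vsub; simpl; lra.
Qed.

Lemma lower_ex : lower_labelling Pex PLp PRp vlist.
Proof.
  split; [|split].
  - unfold vlist; nodup_tac.
  - intros q; split.
    + intros Hq. unfold Pex, ulist, vlist, PLp, PRp, below, cross, vsub in *.
      simpl in Hq. repeat (destruct Hq as [Hq|Hq]; [subst q; simpl; split; [tauto|lra]|]). contradiction.
    + intros [Hq Ha]. unfold Pex, ulist, vlist, PLp, PRp, below, cross, vsub in *.
      simpl in Hq. repeat (destruct Hq as [Hq|Hq]; [subst q; simpl in *; first [tauto|lra]|]). contradiction.
  - intros i j Hij Hj. unfold vlist in Hj; simpl in Hj.
    dJ i; dJ j; try lia; unfold vlist, PLp, cross, vsub; simpl; lra.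
Qed.

Definition sidet (i j : nat) : bool := true.

Lemma split_ex : valid_split adjex PLp PRp ulist vlist sidet.
Proof.
  intros i j Hi Hj Hadj. simpl in Hi, Hj. cbv zeta. split.
  - intros _. apply N3. apply adj_UV; auto.
  - unfold sidet; discriminate.
Qed.

Lemma G1e i j : G1adj adjex ulist vlist sidet i j <-> ((i < 6)%nat /\ (j < 3)%nat /\ eidx i j = true).
Proof.
  split.
  - intros (Hi & Hj & Ha & _). simpl in Hi, Hj. repeat split; auto. apply adj_UV; auto.
  - intros (Hi & Hj & E). repeat split; auto. exists i, j. repeat split; auto.
Qed.

Ltac kt k := solve [exists k; split; [lia| apply G1e; repeat split; (lia || reflexivity)]].

Ltac iso_case :=
  split;
  [ intro H; first [ discriminate |
    split; [apply G1e; repeat split; (lia || reflexivity) |];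
    first [kt 1%nat | kt 2%nat | kt 3%nat | kt 4%nat | kt 5%nat] ]
  | intros [G [k [Hk Gk]]]; apply G1e in G; apply G1e in Gk;
    destruct G as (_ & _ & E); destruct Gk as (Hk6 & _ & Ek);
    first [reflexivity | discriminate | dI k; try lia; discriminate] ].

Lemma iso_ex : obg_iso Hobg (G1' adjex ulist vlist sidet).
Proof.
  split; [reflexivity|split; [reflexivity|]].
  intros i j Hi Hj. simpl in Hi, Hj. unfold G1', Hobg; simpl oadj.
  dI i; try lia; dJ j; try lia; iso_case.
Qed.

Lemma part2 : in_G_LGG Hobg.
Proof.
  exists Pex, adjex. split; [apply lgg_ex|].
  split; [apply convex_ex|].
  exists PLp, PRp, ulist, vlist, sidet.
  split; [unfold Pex; simpl; tauto|].
  split; [unfold Pex; simpl; tauto|].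
  split; [unfold PLp, PRp; intro E; injection E; intros; lra|].
  split; [apply antip_ex|].
  split; [apply upper_ex|].
  split; [apply lower_ex|].
  split; [apply split_ex|].
  left; apply iso_ex.
Qed.

Theorem lemma9 :
  (forall H : obg, in_G_UDG H -> in_G_LGG H) /\
  (exists H : obg, in_G_LGG H /\ ~ in_G_UDG H).
Proof.
  split; [apply part1|].
  exists Hobg. split; [apply part2|apply not_udg].
Qed.
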